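(* For all $x,y\in\mathcal{X}$, $N\in\mathbb{N}^+$ and $\eta>0$, $$\tilde\alpha_N(x,y)-\alpha(x,y)\le\eta+2\sup_{x'\in\mathcal{X}}\mathbb{P}_{Q_{x',N}}\left[|W_{x',N}-1|\ge\frac{\eta}{2(1+\eta)}\right].$$
   Context: Let $(\mathcal{X},\mathcal{B}(\mathcal{X}))$ be a measurable space, $\pi$ a probability distribution on it with density $\pi(x)$ with respect to a reference measure, and $q$ a Markov proposal kernel. For each $x\in\mathcal{X}$, $N\in\mathbb{N}^+$, $Q_{x,N}$ is a probability distribution on $[0,\infty)$ such that $W_{x,N}\sim Q_{x,N}$ satisfies $W_{x,N}>0$ a.s. and $\mathbb{E}[W_{x,N}]=1$. Define $\alpha(x,y)=\min\{1,\frac{\pi(dy)q(y,dx)}{\pi(dx)q(x,dy)}\}$ and $\tilde\alpha_N(x,y)=\mathbb{E}[\min\{1,\frac{\pi(dy)q(y,dx)}{\pi(dx)q(x,dy)}\frac{W_{y,N}}{W_{x,N}}\}]$ with $W_{x,N}\sim Q_{x,N}$ and $W_{y,N}\sim Q_{y,N}$ independent. *)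

(* Defs.v *)
From HB Require Import structures.
From mathcomp Require Import all_boot all_order all_algebra.
From mathcomp Require Import all_classical all_reals all_analysis.
Set Implicit Arguments. Unset Strict Implicit. Unset Printing Implicit Defensive.
Import Order.TTheory GRing.Theory Num.Theory.
Local Open Scope classical_set_scope.
Local Open Scope ring_scope.
Local Open Scope ereal_scope.

(* alpha(x,y) = min{1, r x y}, where r x y stands for the acceptance ratio
   pi(dy) q(y,dx) / (pi(dx) q(x,dy)) (a nonnegative real number). *)
Definition mh_alpha (X : Type) (R : realType) (r : X -> X -> R) (x y : X) : R :=
  Num.min 1%R (r x y).

(* tilde alpha_N(x,y) = E[min{1, r x y * W_y / W_x}] with W_x ~ Q x N and
   W_y ~ Q y N independent, i.e. the expectation under the product measure
   (Q x N) \x (Q y N); a pair w = (W_x, W_y). *)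
Definition pm_alpha (X : Type) (R : realType) (r : X -> X -> R)
    (Q : X -> nat -> probability R R) (N : nat) (x y : X) : \bar R :=
  \int[(Q x N \x Q y N)%E]_(w in setT)
     (Num.min 1%R (r x y * (w.2 / w.1)))%:E.

Definition weight_law (R : realType) (P : probability R R) : Prop :=
  P [set w : R | (0 < w)%R] = 1 /\ \int[P]_(w in setT) w%:E = 1.

(* Main.v *)
Require Import Defs.
From HB Require Import structures.
From mathcomp Require Import all_boot all_order all_algebra.
From mathcomp Require Import all_classical all_reals all_analysis.
From mathcomp Require Import measurable_realfun.
From mathcomp Require Import lra.
Import Order.TTheory GRing.Theory Num.Theory.
Local Open Scope classical_set_scope.
Local Open Scope ring_scope.

Lemma le_int_nm d (T : measurableType d) (R : realType) (mu : {measure set T -> \bar R})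
  (f g : T -> \bar R) : (forall x, (0 <= f x)%E) -> (forall x, (f x <= g x)%E) ->
  (\int[mu]_(x in setT) f x <= \int[mu]_(x in setT) g x)%E.
Proof.
move=> f0 fg.
have g0 : forall x, (0 <= g x)%E by move=> x; exact: le_trans (f0 x) (fg x).
rewrite !ge0_integralTE //.
apply: le_ereal_sup => _ [h hf <-]; exists h => //= x; exact: le_trans (hf x) (fg x).
Qed.

Lemma mA (R : realType) (c : R) : measurable [set w : R | c <= `|w - 1|].
Proof.
have mf : measurable_fun setT (fun w : R => `|w - 1|).
  by apply: measurableT_comp => //; apply: measurable_funB.
have h := @measurable_fun_ler _ _ R setT (cst c) (fun w : R => `|w - 1|) (measurable_cst _) mf measurableT [set true] I.
rewrite setTI in h.
suff -> : [set w : R | c <= `|w - 1|] = (fun x : R => cst c x <= `|x - 1|) @^-1` [set true] by [].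
by apply/seteqP; split => w /=.
Qed.

Theorem lemma3p7 (d : measure_display) (X : measurableType d) (R : realType)
    (r : X -> X -> R) (Q : X -> nat -> probability R R) :
  (forall x y, 0 <= r x y) ->
  (forall x N, (0 < N)%N -> weight_law (Q x N)) ->
  forall (x y : X) (N : nat) (eta : R), (0 < N)%N -> 0 < eta ->
  (pm_alpha r Q N x y - (mh_alpha r x y)%:E <=
   eta%:E + 2%:E * ereal_sup
     [set Q x' N [set w : R | (eta / (2 * (1 + eta)) <= `|w - 1|)%R]
     | x' in [set: X]])%E.
Proof.
move=> r0 _ x y N eta _ eta0.
set del := eta / (2 * (1 + eta)).
set A := [set w : R | del <= `|w - 1|].
set S := ereal_sup _.
have mAA : measurable A by exact: mA.
set al := mh_alpha r x y.
have al0 : 0 <= al by rewrite /al /mh_alpha le_min ler01 r0.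
have al1 : al <= 1 by rewrite /al /mh_alpha ge_min lexx.
set P := (Q x N \x Q y N)%E.
set F := fun w : R * R => (Num.min 1%R (r x y * (w.2 / w.1)))%:E.
pose G := fun w : R * R => (((al + eta)%:E + (\1_(A `*` setT) w)%:E) + (\1_(setT `*` A) w)%:E)%E.
have h1 : (pm_alpha r Q N x y <= \int[P]_(w in setT) F^\+ w)%E.
  rewrite /pm_alpha -/P -/F integralE.
  rewrite -[X in (_ <= X)%E]sube0; apply: leeB => //.
  by apply: integral_ge0 => w _; exact: funeneg_ge0.
have h2 : (\int[P]_(w in setT) F^\+ w <= \int[P]_(w in setT) G w)%E.
  apply: le_int_nm => w; first by rewrite funeposE le_max lexx orbT.
  rewrite funeposE ge_max; apply/andP; split; last first.
    rewrite /G -!EFinD lee_fin !indicE; have := ler0n R (w \in A `*` setT); have := ler0n R (w \in setT `*` A); have := ltW eta0; lra.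
  rewrite /F /G -!EFinD lee_fin !indicE.
  have Hm : Num.min 1 (r x y * (w.2 / w.1)) <= 1 by rewrite ge_min lexx.
  case: (boolP (w \in A `*` setT)) => H1.
    apply: (le_trans Hm); have := ler0n R (w \in setT `*` A); have := ltW eta0; rewrite /=; lra.
  case: (boolP (w \in setT `*` A)) => H2.
    apply: (le_trans Hm); have := ltW eta0; rewrite /=; lra.
  rewrite /= !addr0.
  have e1 : `|w.1 - 1| < del.
    rewrite ltNge; apply/negP => hh; apply: (negP H1); rewrite in_setE; split => //.
  have e2 : `|w.2 - 1| < del.
    rewrite ltNge; apply/negP => hh; apply: (negP H2); rewrite in_setE; split => //.
  move: e1 e2; rewrite !ltr_norml => /andP[e1 e1'] /andP[e2 e2'].
  have hd : del * (2 * (1 + eta)) = eta by rewrite /del mulfVK // mulf_neq0 // gt_eqF // ltr_pwDl // ltW.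
  have d0 : 0 <= del by rewrite /del divr_ge0 // ?mulr_ge0 ?addr_ge0 // ltW.
  have w1p : 0 < w.1 by nra.
  have w2p : 0 < w.2 by nra.
  have t0 : 0 <= w.2 / w.1 by rewrite divr_ge0 // ltW.
  have t1 : w.2 / w.1 <= 1 + eta by rewrite ler_pdivrMr //; nra.
  have rr := r0 x y.
  rewrite /al /mh_alpha; case: (leP 1 (r x y)) => hr.
      apply: (le_trans Hm); lra.
  rewrite ge_min; apply/orP; right; nra.
have mX1 : measurable (A `*` [set: R]) by apply: measurableX.
have mX2 : measurable ([set: R] `*` A) by apply: measurableX.
have h3 : (\int[P]_(w in setT) G w = (al + eta)%:E + Q x N A + Q y N A)%E.
  rewrite /G ge0_integralD //; last 3 first.
  - move=> w _; rewrite -EFinD lee_fin !indicE; have := ler0n R (w \in A `*` setT); have := ltW eta0; lra.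
  - apply: emeasurable_funD => //; apply/measurable_EFinP; exact: measurable_indic.
  - apply/measurable_EFinP; exact: measurable_indic.
  rewrite ge0_integralD //; last 2 first.
  - move=> w _; rewrite lee_fin; have := ltW eta0; lra.
  - apply/measurable_EFinP; exact: measurable_indic.
  have e1 : (P (A `*` setT) = Q x N A)%E by rewrite /P product_measure1E // -[RHS]mule1; congr (_ * _)%E; exact: probability_setT.
  have e2 : (P (setT `*` A) = Q y N A)%E by rewrite /P product_measure1E // -[RHS]mul1e; congr (_ * _)%E; exact: probability_setT.
  have e3 : (P setT = 1)%E by rewrite /P -setXTT product_measure1E // -[RHS]mule1; congr (_ * _)%E; exact: probability_setT.
  rewrite (integral_cst _ measurableT) !integral_indic // !setIT; congr (_ + _ + _)%E; [rewrite -[RHS]mule1; congr (_ * _)%E; exact: e3|exact: e1|exact: e2].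
have aS : (Q x N A <= S)%E by apply: ereal_sup_ubound; exists x.
have bS : (Q y N A <= S)%E by apply: ereal_sup_ubound; exists y.
have a0 : (0 <= Q x N A)%E by exact: measure_ge0.
have S0 : (0 <= S)%E by exact: le_trans a0 aS.
rewrite leeBlDr //.
rewrite h3 in h2; apply: (le_trans h1); apply: (le_trans h2).
have -> : (2%:E * S = S + S)%E.
  have -> : (2 : R) = 1 + 1 by lra.
  by rewrite EFinD ge0_muleDl // mul1e.
rewrite -addeA [in X in (_ <= X)%E]addeAC -EFinD.
apply: leeD; first by rewrite addrC.
exact: leeD.
Qed.
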